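(* Consider one of the three families (bucket recursive trees, $(b,d)$-ary increasing trees, $(b,\alpha)$-PORTs) generated by the growth process. Let $j\ge1$ and $\ell\in\{1,\dots,b\}$ with $\mathbb P\{K_j=\ell\}>0$, and let $Y_{n,\ell,j}$ denote $Y_{n,j}$ conditioned on $K_j=\ell$, for $n\ge j$. For $i\ge j$ let $A_{i,\ell,j}$ be the indicator (under the same conditioning) that label $i$ is a descendant of label $j$. Then $A_{j,\ell,j}=1$, $$Y_{n,\ell,j}=\sum_{i=j}^nA_{i,\ell,j},$$ and for $i\ge j$, $$\mathbb P\{A_{i+1,\ell,j}=1\mid Y_{i,\ell,j}\}=\begin{cases}\frac{\ell-1+Y_{i,\ell,j}}{i},&\text{bucket recursive trees},\\ \frac{(d-1)(\ell-1+Y_{i,\ell,j})+1}{(d-1)i+1},&\text{$(b,d)$-ary increasing trees},\\ \frac{(\alpha+1)(\ell-1+Y_{i,\ell,j})-1}{(\alpha+1)i-1},&\text{$(b,\alpha)$-PORTs}.\end{cases}$$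
   Context: Fix $b\ge1$. A bucket tree is a rooted unordered tree whose nodes (''buckets'') $v$ contain $c(v)\in\{1,\dots,b\}$ labels (capacity); $v$ is saturated if $c(v)=b$, and every node with a child is saturated; $d^+(v)$ is its number of children; the size is the total number of labels. Growth process: start with a root bucket containing label 1; given the tree of size $n\ge1$, choose a node $v$ with probability $p(v)$; if $v$ is unsaturated, add label $n+1$ to $v$, otherwise attach to $v$ a new child bucket containing only $n+1$. Families: bucket recursive trees $p(v)=c(v)/n$; $(b,d)$-ary increasing trees ($d\ge2$ integer) $p(v)=\frac{(d-1)c(v)+1-d^+(v)}{(d-1)n+1}$; $(b,\alpha)$-plane oriented recursive trees, $(b,\alpha)$-PORTs ($\alpha>0$) $p(v)=\frac{d^+(v)+(\alpha+1)c(v)-1}{(\alpha+1)n-1}$ (capacities and out-degrees in the current tree of size $n$). $K_j$ is the capacity of the bucket containing label $j$ in the tree of size $j$ (its initial bucket size). $Y_{n,j}$ (number of descendants of label $j$) is the number of labels $\ge j$ contained in the subtree rooted at the bucket containing label $j$, in the tree of size $n$; a label $i\ge j$ is a descendant of $j$ if it is counted there. *)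

(* Defs.v *)
From mathcomp Require Import all_boot all_order all_algebra.
Set Implicit Arguments. Unset Strict Implicit. Unset Printing Implicit Defensive.
Import Order.TTheory GRing.Theory Num.Theory.
Local Open Scope ring_scope.

(* A bucket tree of size n is encoded as a list s of length n of pairs:
   entry number (i-1) describes label i: its first component is the id of
   the bucket containing label i, where a bucket is identified by the
   label that created it (its smallest label); its second component is
   the id of the parent bucket when label i created a new (non-root)
   bucket, and 0 otherwise.  The root bucket has id 1. *)
Definition btree := seq (nat * nat).

Definition bucket_of (s : btree) (i : nat) : nat := (nth (0%N, 0%N) s i.-1).1.
Definition parent (s : btree) (w : nat) : nat := (nth (0%N, 0%N) s w.-1).2.

(* nodes = buckets *)
Definition isnode (s : btree) (v : nat) : bool :=
  (0 < v <= size s)%N && (bucket_of s v == v).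
Definition cap (s : btree) (v : nat) : nat := count (fun p => p.1 == v) s.
(* out-degree d^+(v) (for v >= 1) *)
Definition outdeg (s : btree) (v : nat) : nat := count (fun p => p.2 == v) s.

Definition step (b : nat) (s : btree) (v : nat) : btree :=
  if (cap s v < b)%N then rcons s (v, 0%N) else rcons s ((size s).+1, v).

(* A history h is the sequence of chosen nodes; h_k is the node chosen in
   the tree of size k+1.  The tree of size (size h).+1 built from h: *)
Definition build (b : nat) (h : seq nat) : btree := foldl (step b) [:: (1%N, 0%N)] h.

Definition tree_at (b : nat) (h : seq nat) (n : nat) : btree := build b (take n.-1 h).

Definition anc (s : btree) (u w : nat) : bool :=
  has (fun k => iter k (parent s) w == u) (iota 0 (size s).+1).

Inductive tfamily (R : Type) :=
| BRT
| DARY of nat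
| PORT of R.
Arguments BRT {R}.

Definition tfamily_ok (R : realFieldType) (fam : tfamily R) : Prop :=
  match fam with
  | BRT => True
  | DARY d => (2 <= d)%N
  | PORT a => 0 < a
  end.

Definition pw (R : realFieldType) (fam : tfamily R) (s : btree) (v : nat) : R :=
  let n := size s in
  let c := cap s v in
  let o := outdeg s v in
  if isnode s v then
    match fam with
    | BRT => c%:R / n%:R
    | DARY d => ((d.-1 * c).+1%:R - o%:R) / ((d.-1 * n).+1)%:R
    | PORT a => (o%:R + (a + 1) * c%:R - 1) / ((a + 1) * n%:R - 1)
    end
  else 0.

Definition hprob (R : realFieldType) (b : nat) (fam : tfamily R) (h : seq nat) : R :=
  \prod_(k < size h) pw fam (build b (take k h)) (nth 0%N h k).

(* all candidate histories of length m (choices among ids 1..k+1 at step k);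
   non-node choices get probability 0 *)
Fixpoint hist (m : nat) : seq (seq nat) :=
  match m with
  | 0 => [:: [::]]
  | m'.+1 => [seq rcons h v | h <- hist m', v <- iota 1 m'.+1]
  end.

(* probability of an event about the first m steps (tree of size m+1) *)
Definition Pr (R : realFieldType) (b : nat) (fam : tfamily R) (m : nat)
  (E : pred (seq nat)) : R :=
  \sum_(h <- hist m) hprob b fam h * (E h)%:R.

Definition K (b : nat) (j : nat) (h : seq nat) : nat :=
  let s := tree_at b h j in cap s (bucket_of s j).

Definition Y (b : nat) (n j : nat) (h : seq nat) : nat :=
  let s := tree_at b h n in
  count (fun i => anc s (bucket_of s j) (bucket_of s i)) (iota j (n.+1 - j)).

Definition A (b : nat) (i j : nat) (h : seq nat) : nat :=
  let s := tree_at b h i in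
  ((j <= i)%N && anc s (bucket_of s j) (bucket_of s i) : nat).

Definition cond_formula (R : realFieldType) (fam : tfamily R) (l y i : nat) : R :=
  match fam with
  | BRT => (l.-1 + y)%:R / i%:R
  | DARY d => ((d.-1 * (l.-1 + y)).+1)%:R / ((d.-1 * i).+1)%:R
  | PORT a => ((a + 1) * (l.-1 + y)%:R - 1) / ((a + 1) * i%:R - 1)
  end.

(* Main.v *)
Require Import Defs.
From mathcomp Require Import all_boot all_order all_algebra.
From mathcomp Require Import zify ring lra.
Import Order.TTheory GRing.Theory Num.Theory.

Module A1.
Set Implicit Arguments. Unset Strict Implicit. Unset Printing Implicit Defensive.

Section Struct.
Variable b : nat.

Lemma size_foldl_step s h : size (foldl (step b) s h) = size s + size h.
Proof.
elim: h s => [|v h IH] s /=; first by rewrite addn0.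
rewrite IH /step; case: ifP => _; rewrite size_rcons; lia.
Qed.

Lemma size_build h : size (build b h) = (size h).+1.
Proof. by rewrite /build size_foldl_step. Qed.

Lemma foldl_step_prefix s h : exists t, foldl (step b) s h = s ++ t.
Proof.
elim: h s => [|v h IH] s /=; first by exists [::]; rewrite cats0.
have [t ->] := IH (step b s v).
rewrite /step; case: ifP => _.
- by exists ((v, 0) :: t); rewrite -cats1 -catA.
- by exists (((size s).+1, v) :: t); rewrite -cats1 -catA.
Qed.

Lemma build_cat h1 h2 : exists t, build b (h1 ++ h2) = build b h1 ++ t.
Proof. by rewrite /build foldl_cat; apply: foldl_step_prefix. Qed.

Lemma take_build k h : k <= size h -> take k.+1 (build b h) = build b (take k h).
Proof.
move=> hk.
have [t E] := build_cat (take k h) (drop k h).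
rewrite cat_take_drop in E.
rewrite E take_size_cat // size_build size_take.
case: ltnP => //; lia.
Qed.

Lemma build_rcons h v : build b (rcons h v) = step b (build b h) v.
Proof. by rewrite /build foldl_rcons. Qed.

Lemma nth_cat_lt (s t : btree) x : x < size s -> nth (0,0) (s ++ t) x = nth (0,0) s x.
Proof. by move=> h; rewrite nth_cat h. Qed.

Lemma bucket_of_cat (s t : btree) v : 0 < v <= size s -> bucket_of (s ++ t) v = bucket_of s v.
Proof. move=> h; rewrite /bucket_of nth_cat_lt //; lia. Qed.

Lemma parent_cat (s t : btree) v : 0 < size s -> v <= size s -> parent (s ++ t) v = parent s v.
Proof. move=> h1 h2; rewrite /parent nth_cat_lt //; lia. Qed.

Lemma isnode_cat (s t : btree) v : isnode s v -> isnode (s ++ t) v.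
Proof.
rewrite /isnode => /andP [h1 h2]; rewrite bucket_of_cat // h2 size_cat andbT.
move: h1 => /andP [h3 h4]; apply/andP; split => //; lia.
Qed.

Lemma isnode_take (s : btree) m v : isnode (take m s) v -> isnode s v.
Proof. by move=> h; rewrite -(cat_take_drop m s); apply: isnode_cat. Qed.

Lemma isnode_range (s : btree) v : isnode s v -> 0 < v <= size s.
Proof. by case/andP. Qed.

Definition gentry (s : btree) (e : nat * nat) : bool :=
  ((e.2 == 0) && isnode s e.1 && (cap s e.1 < b)) ||
  ((e.1 == (size s).+1) && isnode s e.2 && (b <= cap s e.2)).

Definition wf (s : btree) : Prop :=
  [/\ nth (0,0) s 0 = (1,0), 0 < size s &
      forall k, 0 < k < size s -> gentry (take k s) (nth (0,0) s k)].

Lemma wf_init : wf [:: (1,0)].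
Proof. split => //= k; lia. Qed.

Lemma wf_step s v : wf s -> isnode s v -> wf (step b s v).
Proof.
case=> h0 hs hk hv.
have gE : gentry s (if cap s v < b then (v, 0) else ((size s).+1, v)).
  rewrite /gentry; case: ifP => hc /=; first by rewrite hv hc.
  by apply/orP; right; rewrite ?eqxx hv leqNgt hc.
have -> : step b s v = rcons s (if cap s v < b then (v, 0) else ((size s).+1, v)).
  by rewrite /step; case: ifP.
split.
- by rewrite nth_rcons hs.
- by rewrite size_rcons.
- move=> k; rewrite size_rcons => hk'.
  rewrite nth_rcons -cats1.
  case: (ltnP k (size s)) => hks.
  + rewrite takel_cat; last lia. apply: hk; lia.
  + have -> : k = size s by lia.
    by rewrite eqxx take_size_cat.
Qed.


Lemma hprob_rcons (R : realFieldType) (fam : tfamily R) h v :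
  hprob b fam (rcons h v) = (hprob b fam h * pw fam (build b h) v)%R.
Proof.
rewrite /hprob size_rcons big_ord_recr /=.
congr (_ * _)%R.
- apply: eq_bigr => k _ /=.
  rewrite nth_rcons (ltn_ord k) -cats1 takel_cat //; last exact: ltnW.
- by rewrite nth_rcons ltnn eqxx -cats1 take_size_cat.
Qed.

Lemma pw_nonnode (R : realFieldType) (fam : tfamily R) s v :
  ~~ isnode s v -> pw fam s v = 0%R.
Proof. by rewrite /pw => /negbTE ->. Qed.

Lemma wf_build (R : realFieldType) (fam : tfamily R) h :
  hprob b fam h != 0%R -> wf (build b h).
Proof.
elim/last_ind: h => [|h v IH]; first by move=> _; exact: wf_init.
rewrite hprob_rcons mulf_eq0 negb_or => /andP [h1 h2].
rewrite build_rcons; apply: wf_step; first exact: IH.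
apply: contraNT h2 => hn; apply/eqP; exact: pw_nonnode.
Qed.

Section WF.
Variable s : btree.
Hypothesis hwf : wf s.

Lemma wf_size : 0 < size s.
Proof. by case: hwf. Qed.

Lemma bucket1 : bucket_of s 1 = 1.
Proof. by case: hwf => h _ _; rewrite /bucket_of h. Qed.

Lemma parent1 : parent s 1 = 0.
Proof. by case: hwf => h _ _; rewrite /parent h. Qed.

Lemma parent0 : parent s 0 = 0.
Proof. by case: hwf => h _ _; rewrite /parent h. Qed.

Lemma size_take_le (t : btree) m : m <= size t -> size (take m t) = m.
Proof. by move=> h; rewrite size_take; case: ltnP => //; lia. Qed.

Lemma wf_entry k : 2 <= k <= size s ->
  (parent s k = 0 /\ isnode (take k.-1 s) (bucket_of s k) /\ cap (take k.-1 s) (bucket_of s k) < b)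
  \/ (bucket_of s k = k /\ isnode (take k.-1 s) (parent s k) /\ b <= cap (take k.-1 s) (parent s k)).
Proof.
move=> hk; case: hwf => _ _ /(_ k.-1) H.
have /H : 0 < k.-1 < size s by lia.
rewrite /gentry size_take_le; last lia.
rewrite /parent /bucket_of.
case/orP => /andP [/andP [/eqP e1 e2] e3]; [left|right]; split => //.
move: e1; have -> : k.-1.+1 = k by lia. done.
Qed.

Lemma bucket_range k : 1 <= k <= size s -> 1 <= bucket_of s k <= k /\ isnode s (bucket_of s k).
Proof.
move=> hk; case: (ltnP k 2) => hk2.
  have -> : k = 1 by lia.
  rewrite bucket1; split => //; rewrite /isnode bucket1 eqxx andbT; have := wf_size; lia.
case: (wf_entry (k := k) _); first lia.
- move=> [_ [hn _]]; have := isnode_range hn; rewrite size_take_le; last lia.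
  move=> hr; split; first lia. exact: isnode_take hn.
- move=> [hb _]; rewrite hb; split; first lia.
  by rewrite /isnode hb eqxx andbT; lia.
Qed.

Lemma pdec w : (parent s w == 0) || (parent s w < w).
Proof.
case: (ltnP (size s) w) => hw.
  by rewrite /parent nth_default ?eqxx //; lia.
case: (ltnP w 2) => hw2.
  by case: w hw hw2 => [|[|]] // _ _; rewrite ?parent0 ?parent1.
case: (wf_entry (k := w) _); first lia.
- by move=> [-> _].
- move=> [_ [hn _]]; have := isnode_range hn; rewrite size_take_le; last lia.
  move=> hr; apply/orP; right; lia.
Qed.

Lemma parent_node k : 1 <= k <= size s -> parent s k != 0 ->
  isnode s (parent s k) /\ bucket_of s k = k /\ parent s k < k.
Proof.
move=> hk hp; case: (ltnP k 2) => hk2.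
  have e : k = 1 by lia.
  by move: hp; rewrite e parent1.
case: (wf_entry (k := k) _); first lia.
- by move=> [e _]; rewrite e in hp.
- move=> [hb [hn _]]; split; first exact: isnode_take hn.
  split => //; have := isnode_range hn; rewrite size_take_le; lia.
Qed.

Lemma node_parent k : 2 <= k <= size s -> isnode s k -> parent s k != 0.
Proof.
move=> hk /andP [_ /eqP hb].
case: (wf_entry (k := k) _) => //.
- move=> [_ [hn _]]; have := isnode_range hn; rewrite size_take_le; last lia.
  rewrite hb; lia.
- move=> [_ [hn _]]; have := isnode_range hn; rewrite size_take_le; last lia.
  lia.
Qed.

Lemma nonnode_parent k : 1 <= k <= size s -> ~~ isnode s k -> parent s k = 0.
Proof.
move=> hk hn; apply/eqP; apply: contraNT hn => hp.
have [_ [hb _]] := parent_node hk hp.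
by rewrite /isnode hb eqxx andbT; lia.
Qed.

Lemma iter_le t w : iter t (parent s) w <= w.
Proof.
elim: t w => [|t IH] w //; rewrite iterSr.
apply: leq_trans (IH _) _; have := pdec w; case/orP => [/eqP -> |]; lia.
Qed.

Lemma iter0 t w : w <= t -> iter t (parent s) w = 0.
Proof.
elim: t w => [|t IH] w; first by case: w.
move=> hw; rewrite iterSr; apply: IH; have := pdec w; case/orP => [/eqP -> |]; lia.
Qed.

Lemma ancP u w N : 0 < u -> w <= N ->
  reflect (exists t, iter t (parent s) w = u)
          (has (fun k => iter k (parent s) w == u) (iota 0 N.+1)).
Proof.
move=> hu hw; apply: (iffP hasP).
- by move=> [t _ /eqP e]; exists t.
- move=> [t e]; exists t; last by rewrite e.
  rewrite mem_iota /=; case: (ltnP t w) => ht; first lia.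
  by move: e; rewrite iter0 //; lia.
Qed.

End WF.
End Struct.

End A1.
Import A1.
Module A2.
Set Implicit Arguments. Unset Strict Implicit. Unset Printing Implicit Defensive.

Lemma s_map (s : btree) : s = map (fun k => nth (0,0) s k.-1) (iota 1 (size s)).
Proof.
have -> : iota 1 (size s) = map (addn 1) (iota 0 (size s)) by rewrite -iotaDl.
rewrite -map_comp.
rewrite -{1}(mkseq_nth (0,0) s) /mkseq; apply: eq_map => k /=; by [].
Qed.

Lemma count_sum T (a : pred T) r : count a r = \sum_(x <- r) a x.
Proof. by elim: r => [|x r IH]; rewrite ?big_nil ?big_cons //= IH. Qed.

Lemma sum_iota_eq a n x F : \sum_(v <- iota a n) (v == x) * F v = (a <= x < a + n) * F x.
Proof.
elim: n a => [|n IH] a; first by rewrite big_nil; case: ltnP => //; lia.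
rewrite /= big_cons IH.
case: (eqVneq a x) => [<-|hne].
- have -> : (a < a < a.+1 + n) = false by lia.
  have -> : (a <= a < a + n.+1) = true by lia.
  by rewrite addn0.
- rewrite mul0n add0n; congr (_ * _).
  case: (boolP (a <= x < a + n.+1)) => h; move: hne => /eqP hne; lia.
Qed.

Lemma cap_iota s v : cap s v = \sum_(k <- iota 1 (size s)) (bucket_of s k == v).
Proof.
by rewrite /cap {1}(s_map s) count_map count_sum.
Qed.

Lemma outdeg_iota s v : outdeg s v = \sum_(k <- iota 1 (size s)) (parent s k == v).
Proof.
by rewrite /outdeg {1}(s_map s) count_map count_sum.
Qed.

Section Sums.
Variable b : nat.
Variable s : btree.
Hypothesis hwf : wf b s.
Variable P : pred nat.
Notation n := (size s).
Notation nP := (fun v => isnode s v && P v).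

Lemma capsum : \sum_(v <- iota 1 n) nP v * cap s v = \sum_(k <- iota 1 n) P (bucket_of s k).
Proof.
under eq_bigr => v _ do rewrite cap_iota big_distrr /=.
rewrite exchange_big /=; apply: eq_big_seq => k; rewrite mem_iota => hk.
under eq_bigr => v _ do rewrite mulnC eq_sym.
rewrite sum_iota_eq.
have [h1 h2] := bucket_range hwf (k := k) ltac:(lia).
by rewrite h2 /= (_ : 1 <= bucket_of s k < 1 + n = true) ?mul1n //; lia.
Qed.

Lemma outsum : \sum_(v <- iota 1 n) nP v * outdeg s v = \sum_(k <- iota 1 n) nP (parent s k).
Proof.
under eq_bigr => v _ do rewrite outdeg_iota big_distrr /=.
rewrite exchange_big /=; apply: eq_big_seq => k; rewrite mem_iota => hk.
under eq_bigr => v _ do rewrite mulnC eq_sym.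
rewrite sum_iota_eq.
case: (boolP (isnode s (parent s k))) => hn /=; last by rewrite muln0.
by have := isnode_range hn; case: (_ <= _ < _) => //; lia.
Qed.

Variable B : nat.
Hypothesis hB : isnode s B.
Hypothesis HP1 : P 1 = (1 == B).
Hypothesis HP2 : forall k, 2 <= k <= n -> isnode s k ->
  P k = (k == B) || P (parent s k) /\ (k == B -> ~~ P (parent s k)).

Lemma nodesum : \sum_(v <- iota 1 n) nP v = (\sum_(v <- iota 1 n) nP v * outdeg s v).+1.
Proof.
rewrite outsum.
have -> : \sum_(v <- iota 1 n) (nP v : nat) =
          \sum_(v <- iota 1 n) ((v == B) * 1 + nP (parent s v)).
  apply: eq_big_seq => k; rewrite mem_iota => hk.
  case: (ltnP k 2) => hk2.
    have -> : k = 1 by lia.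
    rewrite (parent1 hwf) HP1 /isnode (bucket1 hwf) eqxx andbT addn0 muln1.
    by have := wf_size hwf; case: (1 == B) => //= ->.
  case: (boolP (isnode s k)) => hk'.
  - have [e1 e2] := HP2 (k := k) ltac:(lia) hk'.
    have := parent_node hwf (k := k) ltac:(lia) (node_parent hwf (k := k) ltac:(lia) hk').
    move=> [pn _]; rewrite pn /= e1.
    case: (eqVneq k B) => [e|ne] /=; first by have hn := e2 (introT eqP e); rewrite (negbTE hn).
    by rewrite mul0n.
  - rewrite (nonnode_parent hwf (k := k) ltac:(lia) hk').
    have -> : (k == B) = false.
      by apply/negbTE; apply: contraNneq hk' => ->.
    by [].
rewrite big_split /= sum_iota_eq muln1.
have := isnode_range hB; rewrite add1n => hr.
by rewrite (_ : 1 <= B < n.+1 = true) //; lia.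
Qed.

End Sums.

End A2.
Import A2.
Module A3.
Set Implicit Arguments. Unset Strict Implicit. Unset Printing Implicit Defensive.
Local Open Scope ring_scope.

Section PW.
Variable R : realFieldType.
Variable fam : tfamily R.

Definition numf (c o : nat) : R := match fam with
  | BRT => c%:R | DARY d => (d.-1 * c).+1%:R - o%:R | PORT a => o%:R + (a + 1) * c%:R - 1 end.
Definition denf (n : nat) : R := match fam with
  | BRT => n%:R | DARY d => (d.-1 * n).+1%:R | PORT a => (a + 1) * n%:R - 1 end.
Definition cnum (c : nat) : R := match fam with
  | BRT => c%:R | DARY d => (d.-1 * c).+1%:R | PORT a => (a + 1) * c%:R - 1 end.

Lemma pwE s v : pw fam s v = if isnode s v then numf (cap s v) (outdeg s v) / denf (size s) else 0.
Proof. by rewrite /pw /numf /denf; case: fam. Qed.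

Lemma condE c n : cond_formula fam 1 c n = cnum c / denf n.
Proof. by rewrite /cond_formula /cnum /denf; case: fam. Qed.

Lemma numsum (r : seq nat) (w cp od : nat -> nat) :
  (\sum_(v <- r) w v = (\sum_(v <- r) w v * od v).+1)%N ->
  \sum_(v <- r) (w v)%:R * numf (cp v) (od v) = cnum (\sum_(v <- r) w v * cp v)%N.
Proof.
move=> hN; rewrite /numf /cnum; case: fam => [|d|a].
- by rewrite natr_sum; apply: eq_bigr => v _; rewrite natrM.
- have -> : \sum_(v <- r) (w v)%:R * ((d.-1 * cp v).+1%:R - (od v)%:R) =
            \sum_(v <- r) (((w v * (d.-1 * cp v))%:R + (w v)%:R) - (w v * od v)%:R) :> R.
    by apply: eq_bigr => v _; rewrite !natrM -addn1 !natrD /=; ring.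
  rewrite sumrB big_split /= -!natr_sum hN.
  have -> : (\sum_(v <- r) w v * (d.-1 * cp v) = d.-1 * \sum_(v <- r) w v * cp v)%N.
    by rewrite big_distrr /=; apply: eq_bigr => v _; rewrite mulnCA.
  by rewrite -addn1 !natrD; ring.
- have -> : \sum_(v <- r) (w v)%:R * ((od v)%:R + (a + 1) * (cp v)%:R - 1) =
            \sum_(v <- r) (((w v * od v)%:R + (a + 1) * (w v * cp v)%:R) - (w v)%:R) :> R.
    by apply: eq_bigr => v _; rewrite !natrM; ring.
  rewrite sumrB big_split /= -mulr_sumr -!natr_sum hN.
  by rewrite -addn1 !natrD; ring.
Qed.

Lemma sum_pw s (P : pred nat) :
  (\sum_(v <- iota 1 (size s)) (isnode s v && P v) =
   (\sum_(v <- iota 1 (size s)) (isnode s v && P v) * outdeg s v).+1)%N ->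
  \sum_(v <- iota 1 (size s)) pw fam s v * (P v)%:R =
  cond_formula fam 1 (\sum_(v <- iota 1 (size s)) (isnode s v && P v) * cap s v)%N (size s).
Proof.
move=> hN; rewrite condE -(@numsum _ (fun v => isnode s v && P v) (cap s) (outdeg s) hN) mulr_suml.
apply: eq_bigr => v _; rewrite pwE.
case: (isnode s v); case: (P v) => /=; rewrite ?mul1r ?mul0r ?mulr1 ?mulr0 //.
Qed.

Lemma cond_one n : tfamily_ok fam -> (0 < n)%N -> cond_formula fam 1 n n = 1.
Proof.
rewrite condE /cnum /denf /tfamily_ok; case: fam => [|d|a] /= h hn; apply: divff.
- by rewrite pnatr_eq0 -lt0n.
- by rewrite pnatr_eq0.
- have : (1 <= n%:R :> R) by rewrite ler1n.
  move=> h1; apply/eqP => h2.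
  have : (a + 1) * n%:R - 1 > 0 :> R.
    have : a * n%:R > 0 by apply: mulr_gt0 => //; lra.
    lra.
  by rewrite h2 ltxx.
Qed.

End PW.

End A3.
Import A3.
Module A4.
Set Implicit Arguments. Unset Strict Implicit. Unset Printing Implicit Defensive.

Lemma ancS (s : btree) u w :
  (exists t, iter t (parent s) w = u) <-> (w = u \/ exists t, iter t (parent s) (parent s w) = u).
Proof.
split.
- move=> [[|t] e]; first by left.
  by right; exists t; rewrite -iterSr.
- case=> [e|[t e]]; first by exists 0.
  by exists t.+1; rewrite iterSr.
Qed.

Section Anc.
Variable b : nat.
Variable s : btree.
Hypothesis hwf : wf b s.

Lemma ancE u w : 0 < u -> w <= size s ->
  reflect (exists t, iter t (parent s) w = u) (anc s u w).
Proof. by move=> hu hw; apply: (ancP hwf hu hw). Qed.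

Lemma iter_cat t k w : w <= size s -> iter k (parent (s ++ t)) w = iter k (parent s) w.
Proof.
elim: k w => [|k IH] w hw //.
rewrite !iterSr parent_cat //; last exact: wf_size hwf.
apply: IH; have := pdec hwf w; case/orP => [/eqP ->|]; lia.
Qed.

Lemma anc_cat t u w : wf b (s ++ t) -> 0 < u -> w <= size s ->
  anc (s ++ t) u w = anc s u w.
Proof.
move=> hwf' hu hw.
have hw' : w <= size (s ++ t) by rewrite size_cat; lia.
apply/(ancP hwf' hu hw')/(ancP hwf hu hw) => [[k e]|[k e]]; exists k; move: e; by rewrite iter_cat.
Qed.

Lemma anc_P1 B : 0 < B -> anc s B 1 = (1 == B).
Proof.
move=> hB; have hs := wf_size hwf.
have h1 : 1 <= size s by lia.
apply/(ancP hwf hB h1)/eqP.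
- move=> [[|t] e] //; move: e; rewrite (iter0 hwf) //; lia.
- by move=> <-; exists 0.
Qed.

Lemma anc_P2 B k : isnode s B -> 2 <= k <= size s -> isnode s k ->
  anc s B k = (k == B) || anc s B (parent s k) /\ (k == B -> ~~ anc s B (parent s k)).
Proof.
move=> hB hk hn.
have [hB1 _] := andP hB; move: hB1 => /andP [hB1 _].
have hp0 := node_parent hwf hk hn.
have [_ [_ hpk]] := parent_node hwf (k := k) ltac:(lia) hp0.
split.
- have hpk' : parent s k <= size s by lia.
  have hk' : k <= size s by lia.
  apply/(ancP hwf hB1 hk')/idP.
  + move/ancS => [->|H]; first by rewrite eqxx.
    by apply/orP; right; apply/(ancP hwf hB1 hpk').
  + case/orP => [/eqP ->|/(ancP hwf hB1 hpk') H]; first by exists 0.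
    by apply/ancS; right.
- move/eqP => e; have hpk' : parent s k <= size s by lia.
  apply/negP => /(ancP hwf hB1 hpk') [t et].
  have := iter_le hwf t (parent s k); rewrite et; lia.
Qed.

Lemma cap_take_mono m m' v : m <= m' -> cap (take m s) v <= cap (take m' s) v.
Proof.
move=> hm.
have -> : take m s = take m (take m' s) by rewrite take_takel.
rewrite /cap -{2}(cat_take_drop m (take m' s)) count_cat; exact: leq_addr.
Qed.

Lemma saturation j k : 1 <= k < j -> j <= size s ->
  anc s (bucket_of s j) (bucket_of s k) = (bucket_of s k == bucket_of s j).
Proof.
move=> hk hj.
have [hBj _] := bucket_range hwf (k := j) ltac:(lia).
have [hBk _] := bucket_range hwf (k := k) ltac:(lia).
have hu : 0 < bucket_of s j by lia.
have hw : bucket_of s k <= size s by lia.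
apply/(ancP hwf hu hw)/eqP; last by move=> ->; exists 0.
move=> [[|t] e] //.
exfalso.
set w' := iter t (parent s) (bucket_of s k).
have ew : parent s w' = bucket_of s j by rewrite -e /= -/w'.
have hw'k : w' <= bucket_of s k by exact: (iter_le hwf).
have hw'0 : 0 < w'.
  case: (posnP w') => // h0; move: ew; rewrite h0 (parent0 hwf); lia.
have hp0 : parent s w' != 0 by rewrite ew; lia.
have [_ [_ hlt]] := parent_node hwf (k := w') ltac:(lia) hp0.
have hw'2 : 2 <= w' by rewrite ew in hlt; lia.
case: (wf_entry hwf (k := w') ltac:(lia)) => [[e0 _]|[_ [_ hc1]]].
  by move: hp0; rewrite e0.
rewrite ew in hc1.
case: (wf_entry hwf (k := j) ltac:(lia)) => [[_ [_ hc2]]|[ebj _]].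
  have hle : w'.-1 <= j.-1 by lia.
  have := cap_take_mono (bucket_of s j) hle; lia.
rewrite ebj in ew hlt; lia.
Qed.

End Anc.

End A4.
Import A4.
Module A5.
Set Implicit Arguments. Unset Strict Implicit. Unset Printing Implicit Defensive.

Lemma hist_size m h : h \in hist m -> size h = m.
Proof.
elim: m h => [|m IH] h; first by rewrite inE => /eqP ->.
move=> /allpairsPdep [x [y [hx _ ->]]]; by rewrite size_rcons (IH _ hx).
Qed.

Lemma bucket_take (s : btree) j k : 1 <= k <= j -> bucket_of (take j s) k = bucket_of s k.
Proof. by move=> hk; rewrite /bucket_of nth_take //; lia. Qed.

Lemma K_sum (s : btree) j : 1 <= j <= size s ->
  cap (take j s) (bucket_of (take j s) j) = \sum_(k <- iota 1 j) (bucket_of s k == bucket_of s j).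
Proof.
move=> hj; rewrite cap_iota size_take_le; last lia.
rewrite bucket_take; last lia.
apply: eq_big_seq => k; rewrite mem_iota => hk; rewrite bucket_take //; lia.
Qed.

Section Main.
Variable b : nat.
Variable s : btree.
Hypothesis hwf : wf b s.

Lemma C_split j : 1 <= j <= size s ->
  \sum_(k <- iota 1 (size s)) anc s (bucket_of s j) (bucket_of s k) =
  ((\sum_(k <- iota 1 j) (bucket_of s k == bucket_of s j)).-1 +
   \sum_(k <- iota j ((size s).+1 - j)) anc s (bucket_of s j) (bucket_of s k))%N.
Proof.
move=> hj.
have -> : iota 1 (size s) = iota 1 j.-1 ++ iota j ((size s).+1 - j).
  have e : size s = (j.-1 + ((size s).+1 - j))%N by lia.
  rewrite {1}e iotaD; congr (_ ++ iota _ _); lia.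
have -> : iota 1 j = iota 1 j.-1 ++ [:: j].
  have e : j = (j.-1 + 1)%N by lia.
  rewrite {1}e iotaD /=; congr (_ ++ [:: _]); lia.
rewrite !big_cat /= big_seq1 eqxx addn1 /=; congr (_ + _)%N.
apply: eq_big_seq => k; rewrite mem_iota => hk.
rewrite (saturation hwf (j := j) (k := k)) //; lia.
Qed.

Lemma A_step j v : isnode s v -> 1 <= j <= size s ->
  anc (step b s v) (bucket_of (step b s v) j) (bucket_of (step b s v) (size s).+1) =
  anc s (bucket_of s j) v.
Proof.
move=> hv hj.
have hwf' := wf_step hwf hv.
have [hB _] := bucket_range hwf (k := j) hj.
have [hv1 _] := andP hv; move: hv1 => /andP [hv0 hvn].
move: hwf'; rewrite /step; case: ifP => hc hwf'.
- rewrite -cats1 in hwf' *.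
  rewrite bucket_of_cat //.
  have -> : bucket_of (s ++ [:: (v, 0)]) (size s).+1 = v.
    by rewrite /bucket_of nth_cat ltnn subnn.
  apply: (anc_cat hwf hwf'); lia.
- rewrite -cats1 in hwf' *.
  rewrite bucket_of_cat //.
  have -> : bucket_of (s ++ [:: ((size s).+1, v)]) (size s).+1 = (size s).+1.
    by rewrite /bucket_of nth_cat ltnn subnn.
  have hN : (size s).+1 <= size (s ++ [:: ((size s).+1, v)]) by rewrite size_cat addn1.
  have hB' : 0 < bucket_of s j by lia.
  apply/(ancP hwf' hB' hN)/(ancP hwf hB' hvn).
  + move/ancS => [e|[t e]]; first lia.
    exists t; move: e; rewrite /parent nth_cat ltnn subnn /=.
    by rewrite (iter_cat hwf).
  + move=> [t e]; apply/ancS; right; exists t.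
    rewrite /parent nth_cat ltnn subnn /= -/(parent _) .
    by rewrite (iter_cat hwf).
Qed.

End Main.

End A5.
Import A5.
Module A6.
Set Implicit Arguments. Unset Strict Implicit. Unset Printing Implicit Defensive.

Lemma wf_take b (s : btree) i : wf b s -> 1 <= i <= size s -> wf b (take i s).
Proof.
case=> h0 hs hk hi; split.
- by rewrite nth_take //; lia.
- by rewrite size_take_le //; lia.
- move=> k; rewrite size_take_le; last lia.
  move=> hk'; rewrite nth_take; last lia.
  rewrite take_takel; last lia.
  apply: hk; lia.
Qed.

Local Open Scope ring_scope.
Section Fam.
Variable R : realFieldType.
Variable fam : tfamily R.
Hypothesis hfam : tfamily_ok fam.
Variable b : nat.

Lemma pw_sum1 s : wf b s -> \sum_(v <- iota 1 (size s)) pw fam s v = 1%R.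
Proof.
move=> hwf.
have hN := @nodesum b s hwf (fun _ => true) 1.
have := @sum_pw R fam s (fun _ => true) _.
rewrite (capsum hwf (fun _ => true)) sum1_size size_iota.
rewrite cond_one //; last exact: wf_size hwf.
move=> H; rewrite -{}H; first by apply: eq_bigr => v _; rewrite mulr1.
apply: hN.
- by rewrite /isnode (bucket1 hwf) eqxx andbT; have := wf_size hwf; lia.
- by [].
- move=> k hk _; split => //; lia.
Qed.

Lemma pw_sumA s j : wf b s -> (1 <= j <= size s)%N ->
  \sum_(v <- iota 1 (size s)) pw fam s v * (anc s (bucket_of s j) v)%:R =
  cond_formula fam 1 (\sum_(k <- iota 1 (size s)) anc s (bucket_of s j) (bucket_of s k)) (size s).
Proof.
move=> hwf hj.
have [hB hBn] := bucket_range hwf (k := j) hj.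
rewrite -(capsum hwf).
apply: sum_pw; apply: (nodesum hwf hBn).
- rewrite (anc_P1 hwf) //; lia.
- move=> k hk hn; exact: (anc_P2 hwf hBn hk hn).
Qed.

End Fam.

End A6.
Import A6.
Module A7.
Set Implicit Arguments. Unset Strict Implicit. Unset Printing Implicit Defensive.

Lemma K_rcons b j h v : (j.-1 <= size h)%N -> K b j (rcons h v) = K b j h.
Proof. by move=> hj; rewrite /K /tree_at -cats1 takel_cat. Qed.

Lemma tree_at_full b h m : size h = m -> tree_at b h m.+1 = build b h.
Proof. by move=> hs; rewrite /tree_at /= take_oversize // hs. Qed.

Lemma Y_rcons b j h v m : size h = m -> Y b m.+1 j (rcons h v) = Y b m.+1 j h.
Proof.
move=> hs; rewrite /Y.
have -> : tree_at b (rcons h v) m.+1 = build b h.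
  by rewrite /tree_at /= -cats1 takel_cat ?hs // take_oversize ?hs.
by rewrite tree_at_full.
Qed.

Lemma A_rcons b j h v m : size h = m ->
  A b m.+2 j (rcons h v) =
  ((j <= m.+2)%N && anc (step b (build b h) v) (bucket_of (step b (build b h) v) j)
                       (bucket_of (step b (build b h) v) m.+2) : nat).
Proof.
move=> hs; rewrite /A /tree_at /= take_oversize ?size_rcons ?hs // build_rcons.
by [].
Qed.

Lemma tree_at_take b h j : (1 <= j <= (size h).+1)%N -> tree_at b h j = take j (build b h).
Proof.
move=> hj; rewrite /tree_at -take_build; last lia.
by congr take; lia.
Qed.

End A7.
Import A7.
Local Open Scope ring_scope.

Theorem mainTheorem6 (R : realFieldType) (b : nat) (fam : tfamily R)
  (j l : nat) :
  (1 <= b)%N -> tfamily_ok fam -> (1 <= j)%N -> (1 <= l <= b)%N ->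
  0 < Pr b fam j.-1 (fun h => K b j h == l) ->
  (* almost surely under the conditioning K_j = l *)
  (forall n h, (j <= n)%N -> h \in hist n.-1 -> 0 < hprob b fam h ->
     K b j h = l ->
     A b j j h = 1%N /\ Y b n j h = (\sum_(j <= i < n.+1) A b i j h)%N) /\
  (* P{A_{i+1,l,j} = 1 | Y_{i,l,j} = y} *)
  (forall i y, (j <= i)%N ->
     0 < Pr b fam i (fun h => (K b j h == l) && (Y b i j h == y)) ->
     Pr b fam i (fun h => [&& K b j h == l, Y b i j h == y & A b i.+1 j h == 1%N])
     / Pr b fam i (fun h => (K b j h == l) && (Y b i j h == y))
     = cond_formula fam l y i).
Proof.
move=> hb hfam hj hl _; split.
- move=> n h hjn hh hp _.
  have hs := hist_size hh.
  have hwf := wf_build (lt0r_neq0 hp).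
  have hsz : size (build b h) = n by rewrite size_build hs; lia.
  split; first by rewrite /A leqnn /anc /= eqxx.
  rewrite /Y.
  have -> : tree_at b h n = build b h.
    by rewrite /tree_at take_oversize // hs.
  rewrite A2.count_sum /index_iota; apply: eq_big_seq => i; rewrite mem_iota => hi.
  change nat in i. move/andP: hi => [hi1 hi2].
  rewrite /A tree_at_take; last by rewrite hs; apply/andP; split; lia.
  have -> : (j <= i)%N by lia.
  rewrite /= !bucket_take; try lia.
  have hwt := wf_take hwf (i := i) ltac:(lia).
  have [hBj _] := bucket_range hwf (k := j) ltac:(lia).
  have [hBi _] := bucket_range hwf (k := i) ltac:(lia).
  rewrite -(anc_cat hwt (t := drop i (build b h))) ?cat_take_drop //; try lia.
  by rewrite size_take_le; lia.
- move=> [|m] y hji hpos; first lia.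
  suff key : Pr b fam m.+1 (fun h => [&& K b j h == l, Y b m.+1 j h == y & A b m.+2 j h == 1%N])
     = cond_formula fam l y m.+1 * Pr b fam m.+1 (fun h => (K b j h == l) && (Y b m.+1 j h == y)).
    by rewrite key mulfK // lt0r_neq0.
  have hE : hist m.+1 = [seq rcons h v | h <- hist m, v <- iota 1 m.+1] by [].
  rewrite /Pr hE !big_allpairs_dep mulr_sumr.
  apply: eq_big_seq => h hh.
  have hs := hist_size hh.
  have eK : forall v, K b j (rcons h v) = K b j h by move=> v; apply: K_rcons; rewrite hs; lia.
  have eY : forall v, Y b m.+1 j (rcons h v) = Y b m.+1 j h by move=> v; exact: Y_rcons.
  have eA := fun v => A_rcons b j v hs.
  under eq_bigr do rewrite hprob_rcons eK eY eA -mulrA.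
  under [in RHS]eq_bigr do rewrite hprob_rcons eK eY -mulrA.
  rewrite -!mulr_sumr.
  case: (eqVneq (hprob b fam h) 0) => [h0|hn0]; first by rewrite h0 !mul0r mulr0.
  set s := build b h.
  have hwf : wf b s := wf_build hn0.
  have hsz : size s = m.+1 by rewrite /s size_build hs.
  case hK: (K b j h == l); case hY: (Y b m.+1 j h == y) => /=;
    try by (rewrite big1 ?mulr0 //; move=> v _; rewrite mulr0).
  move: hK hY => /eqP hK /eqP hY.
  under [in RHS]eq_bigr do rewrite mulr1.
  rewrite -/(iota 1 m.+1) -!hsz (pw_sum1 hfam hwf) mulr1.
  have hjs : (1 <= j <= size s)%N by rewrite hsz; apply/andP; split; lia.
  have -> : \sum_(v <- iota 1 (size s))
      pw fam s v * (nat_of_bool ((j <= (size s).+1)%N && anc (step b s v) (bucket_of (step b s v) j) (bucket_of (step b s v) (size s).+1)) == 1%N)%:R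
      = \sum_(v <- iota 1 (size s)) pw fam s v * (anc s (bucket_of s j) v)%:R.
    apply: eq_bigr => v _.
    case: (boolP (isnode s v)) => hv; last by rewrite pw_nonnode // !mul0r.
    rewrite (A_step hwf hv hjs).
    have -> : (j <= (size s).+1)%N by lia.
    by case: (anc _ _ _).
  rewrite (pw_sumA fam hwf hjs) (C_split hwf hjs).
  have -> : (\sum_(k <- iota 1 j) (bucket_of s k == bucket_of s j))%N = l.
    rewrite -hK /K tree_at_take; last by rewrite hs; apply/andP; split; lia.
    by rewrite K_sum.
  have -> : (\sum_(k <- iota j ((size s).+1 - j)) anc s (bucket_of s j) (bucket_of s k))%N = y.
    by rewrite -hY /Y tree_at_full // A2.count_sum hsz.
  by rewrite mulrC.
Qed.
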